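(* Let $X$ be a compact Hausdorff topological space. Then $H_n^M(X)=0$ for all $n>0$.
   Context: A continuous multivalued map $X\to Y$ is a subset $T\subset X\times Y$ such that the restriction of the projection $X\times Y\to X$ to $T$ is proper (universally closed; equivalently closed with compact fibers), surjective and has finite fibers; $M(X,Y)$ is the set of these. For $\alpha\in M(\Delta_n,X)$ and a continuous map $f:\Delta_{n-1}\to\Delta_n$, $\alpha\circ\mathrm{gr}(f)=\{(s,x)\in\Delta_{n-1}\times X:(f(s),x)\in\alpha\}$. Let $\Delta_n=\{(t_0,\dots,t_n)\in\mathbb{R}^{n+1}: t_i\ge 0,\ \sum t_i=1\}$ and $\delta^n_i:\Delta_{n-1}\to\Delta_n$, $\delta^n_i(t_0,\dots,t_{n-1})=(t_0,\dots,t_{i-1},0,t_i,\dots,t_{n-1})$ for $0\le i\le n$. Set $S_n^M(X)=M(\Delta_n,X)$, $d^i_n(\alpha)=\alpha\circ\mathrm{gr}(\delta^n_i)$, let $C_n^M(X)$ be the free abelian group with basis $S_n^M(X)$ and differential $d_n=\sum_{i=0}^n(-1)^i d^i_n$, and define the multivalued singular homology $H_n^M(X)=H_n(C_*^M(X),d_* )$. *)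

(* Defs.v *)
From HB Require Import structures.
From mathcomp Require Import all_boot all_order all_algebra.
From mathcomp Require Import all_classical all_reals all_analysis.
Unset Printing Implicit Defensive.
Import Order.TTheory GRing.Theory Num.Theory.
Import numFieldNormedType.Exports.
Local Open Scope classical_set_scope.
Local Open Scope ring_scope.

Section MV.
Variables (R : realType) (X : topologicalType).

Definition simplex (n : nat) : set 'rV[R]_(n.+1) :=
  [set t | (forall j, 0 <= t 0 j) /\ \sum_(j < n.+1) t 0 j = 1].

(* Ambient space of (graphs of) multivalued maps Delta_n -> X. *)
Definition Pt (n : nat) := ('rV[R]_(n.+1) * X)%type.

(* Closed subsets of T are T `&` D with D
   closed; since Delta_n is closed in R^{n+1}, closedness in Delta_n equals
   closedness in R^{n+1}. *)
Definition is_mvmap (n : nat) (T : set (Pt n)) : Prop :=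
  [/\ (forall p, T p -> simplex n p.1),
      (forall D : set (Pt n), closed D -> closed (fst @` (T `&` D))),
      (forall t, compact [set x | T (t, x)]),
      (forall t, simplex n t -> exists x, T (t, x)) &
      (forall t, finite_set [set x | T (t, x)])].

Definition delta (n : nat) (i : 'I_n.+2) (t : 'rV[R]_(n.+1)) : 'rV[R]_(n.+2) :=
  \row_(j < n.+2) (if (j < i)%N then t 0 (inord j)
                   else if (j == i :> nat) then 0 else t 0 (inord j.-1)).

Definition face (n : nat) (i : 'I_n.+2) (A : set (Pt n.+1)) : set (Pt n) :=
  [set p | simplex n p.1 /\ A (delta n i p.1, p.2)].

(* A chain of degree n: a finite formal Z-linear combination of elements
   of S_n^M(X), represented by a list of (coefficient, generator) pairs. *)
Definition chain (n : nat) := seq (int * set (Pt n)).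

Definition is_chain (n : nat) (s : chain n) : Prop :=
  forall p, p \in s -> is_mvmap n p.2.

(* The coefficient of the generator B in the formal sum s; two formal sums
   are equal in the free abelian group C_n^M(X) iff their coefficient
   functions agree. *)
Definition coef (n : nat) (s : chain n) (B : set (Pt n)) : int :=
  \sum_(p <- s) (if asbool (p.2 = B) then p.1 else 0).

Definition bdry (n : nat) (s : chain n.+1) : chain n :=
  flatten [seq [seq (((-1) ^+ (i : nat)) * p.1, face n i p.2) | i : 'I_n.+2 <- enum 'I_n.+2]
          | p <- s].

Definition homology_vanishes (m : nat) : Prop :=
  forall s : chain m.+1, is_chain m.+1 s ->
    (forall B, coef m (bdry m s) B = 0) ->
    exists t : chain m.+2, is_chain m.+2 t /\ forall B, coef m.+1 (bdry m.+1 t) B = coef m.+1 s B.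

End MV.

(* Main.v *)
Require Import Defs.
From HB Require Import structures.
From mathcomp Require Import all_boot all_order all_algebra.
From mathcomp Require Import all_classical all_reals all_analysis.
From mathcomp Require Import lra zify ring.
Import Order.TTheory GRing.Theory Num.Theory.
Import numFieldNormedType.Exports.
Local Open Scope classical_set_scope.
Local Open Scope ring_scope.

Lemma proj_closed (Y X : topologicalType) (A : set (Y * X)) :
  compact [set: X] -> closed A -> closed (fst @` A).
Proof.
move=> cX cA y cly.
pose F : set_system X := fun S => exists U, nbhs y U /\
   (fun x => exists y', U y' /\ A (y', x)) `<=` S.
have FF : Filter F.
  split.
  - by exists setT; split => //; exact: filterT.
  - move=> P Q [U [nU sU]] [V [nV sV]]; exists (U `&` V); split.
      exact: filterI.
    by move=> x [y' [[Uy Vy] Ay]]; split; [apply: sU|apply: sV]; exists y'.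
  - by move=> P Q PQ [U [nU sU]]; exists U; split => // x /sU /PQ.
have PF : ProperFilter F.
  apply: Build_ProperFilter_ex => // P [U [nU sU]].
  have [_ [[p Ap <-] Up]] := cly U nU.
  by exists p.2; apply: sU; exists p.1; split => //; case: p Ap Up.
have [x [_ clx]] := cX F PF (ex_intro _ setT (conj (@filterT _ _ (nbhs_filter y)) (fun _ _ => I))).
exists (y, x) => //; apply: cA => B /= [[U V] [nU nV] sB].
have [x' [[y' [Uy Ay]] Vx]] := clx _ _ (ex_intro _ U (conj nU (fun z h => h))) nV.
by exists (y', x'); split => //; apply: sB.
Qed.

Lemma graph_closed (Y X : topologicalType) (A : set (Y * X)) :
  hausdorff_space X ->
  (forall D : set (Y * X), closed D -> closed (fst @` (A `&` D))) ->
  (forall t, compact [set x | A (t, x)]) -> closed A.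
Proof.
move=> hX pA cA [t x] clA.
pose Fb := [set x | A (t, x)].
pose G : set_system X := fun S => exists U, nbhs x U /\ (closure U `&` Fb) `<=` S.
have GF : Filter G.
  split.
  - by exists setT; split => //; exact: filterT.
  - move=> P Q [U [nU sU]] [V [nV sV]]; exists (U `&` V); split.
      exact: filterI.
    move=> z [/closureI [cU cV] Fz]; split; [apply: sU|apply: sV]; by split.
  - by move=> P Q PQ [U [nU sU]]; exists U; split => // z /sU /PQ.
have PG : ProperFilter G.
  apply: Build_ProperFilter_ex => // P [U [nU sU]].
  have cD : closed (setT `*` closure U : set (Y * X)).
    have -> : (setT `*` closure U : set (Y * X)) = snd @^-1` closure U.
      by apply/seteqP; split => p //= [].
    apply: preimage_closed; last exact: closed_closure.
    move=> p _; exact: cvg_snd.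
  have : closure (fst @` (A `&` (setT `*` closure U))) t.
    move=> W nW.
    have nWU : nbhs ((t, x) : Y * X) (W `*` U).
      by exists (W, U) => //.
    have [p [Ap [Wp Up]]] := clA _ nWU.
    exists p.1; split => //; exists p => //; split => //; split => //.
    exact: subset_closure.
  move/(pA _ cD) => [p [Ap [_ cUp]] pt].
  by exists p.2; apply: sU; split => //; rewrite /Fb -pt; case: p Ap cUp pt.
have GFb : G Fb by exists setT; split; [exact: filterT | by move=> z []].
have [y [Fy cly]] := cA t G PG GFb.
have -> : x = y.
  apply: hX => U V nU nV.
  have GU : G (closure U `&` Fb) by exists U; split.
  move: nV; rewrite nbhsE => -[W [oW Wy] WV].
  have [z [[cUz _] Wz]] := cly _ _ GU (open_nbhs_nbhs (conj oW Wy)).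
  have [w [Uw Ww]] := cUz W (open_nbhs_nbhs (conj oW Wz)).
  by exists w; split => //; apply: WV.
exact: Fy.
Qed.

Section Topo.
Variable R : realType.
Definition rho n (t : 'rV[R]_(n.+2)) : 'rV[R]_(n.+1) :=
  \row_j (t 0 (lift ord0 j) / Num.max (1 - t 0 0) 2^-1).

Lemma sum_cont (Y : topologicalType) m (f : 'I_m -> Y -> R) :
  (forall j, continuous (f j)) -> continuous (fun y => \sum_(j < m) f j y).
Proof.
elim: m f => [|m IH] f fc y.
  under eq_fun do rewrite big_ord0. exact: cvg_cst.
under eq_fun do rewrite big_ord_recr /=.
apply: cvgD; last exact: fc.
exact: (IH (fun j => f (widen_ord (leqnSn m) j))).
Qed.

Lemma mx_cont (Y : topologicalType) a b (f : Y -> 'M[R]_(a, b)) :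
  (forall i j, continuous (fun y => f y i j)) -> continuous f.
Proof.
move=> fc y A [P HP sPA].
apply: (@filterS _ _ _ [set y' | forall i j, P i j (f y' i j)]).
  by move=> y' Hy'; apply: sPA.
apply: filter_forall => i; apply: filter_forall => j.
exact: (fc i j y (P i j) (HP i j)).
Qed.

Lemma simplex_closed n : closed (simplex R n).
Proof.
have -> : simplex R n = (\bigcap_(j in setT) [set t : 'rV[R]_n.+1 | 0 <= t 0 j]) `&`
   ((fun t : 'rV[R]_n.+1 => \sum_(j < n.+1) t 0 j) @^-1` [set 1]).
  by apply/seteqP; split => t /= [H1 H2]; split => // j; [move=> _; exact: H1 | exact: H1].
apply: closedI.
  apply: closed_bigI => j _.
  apply: (@preimage_closed _ _ (fun t : 'rV[R]_n.+1 => t 0 j) [set r : R | 0 <= r]).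
    by move=> t _; exact: coord_continuous.
  exact: closed_ge.
apply: preimage_closed; last exact: closed_eq.
move=> t _; apply: sum_cont => j; exact: coord_continuous.
Qed.

Lemma rho_cont n : continuous (rho n).
Proof.
apply: mx_cont => i j t.
have -> : (fun y => rho n y i j) = (fun y : 'rV[R]_n.+2 => y 0 (lift ord0 j) * (Num.max (1 - y 0 0) 2^-1)^-1).
  by apply: funext => y; rewrite /rho mxE.
apply: (@cvgM _ _ (nbhs t)).
  exact: coord_continuous.
apply: (@cvgV _ _ (nbhs t)).
  by rewrite gt_eqF // lt_max orbC invr_gt0 ltr0n.
have h1 : {for t, continuous (fun t0 : 'rV[R]_n.+2 => 1 - t0 0 0)}.
  exact: (@cvgB R R^o _ (nbhs t) _ (fun=> 1) (fun t0 : 'rV[R]_n.+2 => t0 0 0) 1 (t 0 0) (cvg_cst _) (@coord_continuous _ _ _ 0 0 t)).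
have h2 : {for t, continuous (fun t0 : 'rV[R]_n.+2 => (2^-1 : R))}.
  exact: (@cvg_cst R^o (2^-1 : R) _ (nbhs t) _).
exact: (@continuous_max R _ _ _ t h1 h2).
Qed.

Lemma delta_at n (i : 'I_n.+2) (t : 'rV[R]_n.+1) : delta R n i t 0 i = 0.
Proof. by rewrite mxE ltnn eqxx. Qed.

Lemma delta_lift n (i : 'I_n.+2) (t : 'rV[R]_n.+1) j :
  delta R n i t 0 (lift i j) = t 0 j.
Proof.
rewrite mxE /= /bump.
have hj := ltn_ord j; have hi := ltn_ord i.
case: (leqP i j) => hij /=.
  have -> : (1 + j < i)%N = false by lia.
  have -> : ((1 + j)%N == i) = false by lia.
  by congr (t 0 _); apply: val_inj; rewrite /= inordK //; lia.
rewrite add0n hij; congr (t 0 _); apply: val_inj; rewrite /= inordK //.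
Qed.

Lemma sum_delta n (i : 'I_n.+2) (t : 'rV[R]_n.+1) :
  \sum_(j < n.+2) delta R n i t 0 j = \sum_(j < n.+1) t 0 j.
Proof.
rewrite (bigD1_ord i) //= delta_at add0r.
by apply: eq_bigr => j _; rewrite delta_lift.
Qed.

Lemma delta_simplex n (i : 'I_n.+2) (t : 'rV[R]_n.+1) :
  simplex R n t -> simplex R n.+1 (delta R n i t).
Proof.
move=> [h1 h2]; split; last by rewrite sum_delta.
move=> j; rewrite mxE; case: ifP => _; first exact: h1.
by case: ifP => _ //; exact: h1.
Qed.

Lemma max_gt0 (x : R) : 0 < Num.max x 2^-1.
Proof. by rewrite lt_max orbC invr_gt0 ltr0n. Qed.

Lemma rho_delta0 n (s : 'rV[R]_n.+1) : rho n (delta R n ord0 s) = s.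
Proof.
apply/rowP => j; rewrite mxE delta_lift.
have -> : delta R n ord0 s 0 0 = 0 by rewrite (delta_at n ord0 s).
rewrite subr0 (_ : Num.max 1 2^-1 = 1) ?divr1 //.
by apply/max_idPl; rewrite invf_le1 ?ler1n // ltr0n.
Qed.

Lemma delta_lift00 n (i : 'I_n.+2) (s : 'rV[R]_n.+2) :
  delta R n.+1 (lift ord0 i) s 0 0 = s 0 0.
Proof.
rewrite mxE /=.
by congr (s 0 _); apply: val_inj; rewrite /= inordK.
Qed.

Lemma rho_delta n (i : 'I_n.+2) (s : 'rV[R]_n.+2) :
  rho n.+1 (delta R n.+1 (lift ord0 i) s) = delta R n i (rho n s).
Proof.
apply/rowP => j; rewrite [LHS]mxE delta_lift00 !mxE /= /bump /=.
have hj := ltn_ord j; have hi := ltn_ord i.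
rewrite !add1n ltnS eqSS.
case: ifP => hji.
  congr (s 0 _ / _); apply: val_inj; rewrite /= /bump /= !inordK //; lia.
case: ifP => hji2; first by rewrite mul0r.
congr (s 0 _ / _); apply: val_inj; rewrite /= /bump /= !inordK //; lia.
Qed.

Lemma rho_simplex n (s : 'rV[R]_n.+2) :
  simplex R n.+1 s -> s 0 0 <= 2^-1 -> simplex R n (rho n s).
Proof.
move=> [h1 h2] hs.
have hM : Num.max (1 - s 0 0) 2^-1 = 1 - s 0 0.
  by apply/max_idPl; lra.
split.
  move=> j; rewrite mxE; apply: divr_ge0; first exact: h1.
  exact: ltW (max_gt0 _).
under eq_bigr do rewrite mxE.
rewrite -mulr_suml hM.
move: h2; rewrite big_ord_recl => h2.
have -> : \sum_(i < n.+1) s 0 (lift ord0 i) = 1 - s 0 0 by rewrite -h2; ring.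
by rewrite divff //; apply/eqP; lra.
Qed.

End Topo.

Section Cone.
Variables (R : realType) (X : topologicalType) (x0 : X).

Definition cone n (A : set (Pt R X n)) : set (Pt R X n.+1) :=
  [set p | simplex R n.+1 p.1 /\
     ((p.1 0 0 <= 2^-1 /\ A (rho R n p.1, p.2)) \/ (2^-1 <= p.1 0 0 /\ p.2 = x0))].

Lemma face0_cone n (A : set (Pt R X n)) : (forall p, A p -> simplex R n p.1) ->
  face R X n ord0 (cone n A) = A.
Proof.
move=> hA.
have d0 : forall s : 'rV[R]_n.+1, delta R n ord0 s 0 0 = 0.
  by move=> s; rewrite (delta_at R n ord0 s).
apply/seteqP; split => [[s x]|[s x] Ap] /=.
  move=> [hs [_ [[_ h]|[h _]]]]; first by rewrite rho_delta0 in h.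
  by move: h; rewrite d0 => h; lra.
split; first exact: (hA _ Ap).
split; first by apply: delta_simplex; exact: (hA _ Ap).
by left; rewrite d0 rho_delta0; split => //; rewrite invr_ge0.
Qed.

Lemma face_cone m (i : 'I_m.+2) (A : set (Pt R X m.+1)) :
  face R X m.+1 (lift ord0 i) (cone m.+1 A) = cone m (face R X m i A).
Proof.
apply/seteqP; split => [[s x]|[s x]] /=.
  move=> [hs [_ H]]; split => //.
  move: H; rewrite delta_lift00 rho_delta => -[[h1 h2]|h]; last by right.
  by left; split => //; split => //; exact: rho_simplex.
move=> [hs H]; split => //; split; first exact: delta_simplex.
rewrite delta_lift00 rho_delta; case: H => [[h1 [_ h2]]|h]; last by right.
by left.
Qed.

Lemma cone_mvmap n (A : set (Pt R X n)) : hausdorff_space X -> compact [set: X] ->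
  is_mvmap R X n A -> is_mvmap R X n.+1 (cone n A).
Proof.
move=> hX cX [h1 h2 h3 h4 h5].
have cA : closed A := @graph_closed _ _ A hX h2 h3.
have cf : continuous (fun p : Pt R X n.+1 => p.1).
  by move=> p; exact: cvg_fst.
have c00 : continuous (fun p : Pt R X n.+1 => p.1 0 0).
  move=> p; apply: (@continuous_comp _ _ _ (fun p : Pt R X n.+1 => p.1) (fun t : 'rV[R]_n.+2 => t 0 0)).
    exact: cf.
  exact: coord_continuous.
have cS : closed (fun p : Pt R X n.+1 => simplex R n.+1 p.1).
  apply: (@preimage_closed _ _ (fun p : Pt R X n.+1 => p.1) (simplex R n.+1)).
    by move=> p _; exact: cf.
  exact: simplex_closed.
have cC : closed (cone n A).
  have -> : cone n A =
     ((fun p : Pt R X n.+1 => simplex R n.+1 p.1) `&`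
       ((fun p : Pt R X n.+1 => p.1 0 0) @^-1` [set r | r <= 2^-1]) `&`
       ((fun p : Pt R X n.+1 => (rho R n p.1, p.2)) @^-1` A)) `|`
     ((fun p : Pt R X n.+1 => simplex R n.+1 p.1) `&`
       ((fun p : Pt R X n.+1 => p.1 0 0) @^-1` [set r | 2^-1 <= r]) `&`
       (snd @^-1` [set x0])).
    apply/seteqP; split => p /=.
      by move=> [hs [[a b]|[a b]]]; [left|right].
    by move=> [[[hs a] b]|[[hs a] b]]; split => //; [left|right].
  apply: closedU; apply: closedI; try apply: closedI => //.
  - apply: preimage_closed; [by move=> p _; exact: c00 | exact: closed_le].
  - apply: preimage_closed => // p _.
    have H1 : (fun q : Pt R X n.+1 => rho R n q.1) @ nbhs p --> rho R n p.1.
      apply: (@continuous_comp _ _ _ (fun p : Pt R X n.+1 => p.1) (rho R n)).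
        exact: cf.
      exact: rho_cont.
    have H2 : (fun q : Pt R X n.+1 => q.2) @ nbhs p --> p.2 by exact: cvg_snd.
    exact: (cvg_pair H1 H2).
  - apply: preimage_closed; [by move=> p _; exact: c00 | exact: closed_ge].
  - apply: preimage_closed; last exact: accessible_closed_set1 (hausdorff_accessible hX) x0.
    by move=> p _; exact: cvg_snd.
have hfin : forall t, finite_set [set x | cone n A (t, x)].
  move=> t; apply: (@sub_finite_set _ _ ([set x | A (rho R n t, x)] `|` [set x0])).
    by move=> x /= [_ [[_ h]|[_ h]]]; [left|right].
  by rewrite finite_setU; split => //; exact: finite_set1.
split.
- by move=> p [].
- move=> D cD; apply: proj_closed => //; exact: closedI.
- by move=> t; apply: finite_compact.
- move=> t ht.
  case: (lerP (t 0 0) 2^-1) => h.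
    have [x hx] := h4 _ (@rho_simplex R n t ht h).
    by exists x; split => //; left.
  by exists x0; split => //; right; split => //; exact: ltW.
- exact: hfin.
Qed.

End Cone.

Section Chains.
Variables (R : realType) (X : topologicalType).

Lemma coef_bdry n (s : chain R X n.+1) B :
  coef R X n (bdry R X n s) B = \sum_(p <- s) \sum_(i < n.+2)
     (if asbool (face R X n i p.2 = B) then (-1) ^+ (i : nat) * p.1 else 0).
Proof.
rewrite /coef /bdry big_flatten big_map; apply: eq_bigr => p _.
rewrite big_map big_enum /=.
by apply: eq_bigr.
Qed.

Lemma vertex_simplex n : simplex R n (\row_(j < n.+1) ((j == ord0)%:R : R)).
Proof.
split.
  by move=> j; rewrite mxE ler0n.
rewrite big_ord_recl mxE eqxx big1 ?addr0 // => j _.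
by rewrite mxE.
Qed.

End Chains.

Theorem mainTheorem6 (R : realType) (X : topologicalType)
  (hX : hausdorff_space X) (cX : compact [set: X]) :
  forall n : nat, (0 < n)%N -> homology_vanishes R X n.-1.
Proof.
case=> [//|m] _ /=.
move=> s hs hcyc.
case: s hs hcyc => [|p0 s'] hs hcyc.
  exists [::]; split; first by move=> p; rewrite in_nil.
  by move=> B; rewrite /coef /bdry /= !big_nil.
have [_ _ _ h4 _] := hs p0 (mem_head _ _).
have [x0 _] := h4 _ (vertex_simplex R m.+1).
set s := p0 :: s'.
exists [seq (p.1, cone R X x0 m.+1 p.2) | p <- s]; split.
  move=> q /mapP [p hp ->] /=.
  by apply: cone_mvmap => //; exact: hs.
move=> B.
rewrite coef_bdry big_map /=.
have E : forall p, p \in s -> \sum_(i < m.+3)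
   (if asbool (face R X m.+1 i (cone R X x0 m.+1 p.2) = B) then (-1) ^+ (i : nat) * p.1 else 0)
   = (if asbool (p.2 = B) then p.1 else 0) -
     \sum_(i < m.+2) (if asbool (cone R X x0 m (face R X m i p.2) = B)
                      then (-1) ^+ (i : nat) * p.1 else 0).
  move=> p hp.
  have [hp1 _ _ _ _] := hs p hp.
  rewrite big_ord_recl face0_cone // expr0 mul1r; congr (_ + _).
  rewrite -sumrN; apply: eq_bigr => i _.
  rewrite face_cone lift0 exprS mulN1r mulNr.
  by case: ifP => _; rewrite ?oppr0.
under eq_big_seq => p hp do rewrite (E p hp).
rewrite big_split /= sumrN.
suff -> : \sum_(p <- s) \sum_(i < m.+2) (if asbool (cone R X x0 m (face R X m i p.2) = B)
                      then (-1) ^+ (i : nat) * p.1 else 0) = 0.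
  by rewrite subr0.
case: (pselect (exists A : set (Pt R X m), (forall q, A q -> simplex R m q.1) /\ cone R X x0 m A = B)).
  move=> [A [hA hB]].
  have inj : forall F : set (Pt R X m), (forall q, F q -> simplex R m q.1) ->
      asbool (cone R X x0 m F = B) = asbool (F = A).
    move=> F hF; apply/idP/idP => /asboolP h; apply/asboolP.
      by rewrite -(@face0_cone R X x0 m F hF) h -hB (@face0_cone R X x0 m A hA).
    by rewrite h.
  apply: (etrans _ (hcyc A)); rewrite coef_bdry.
  apply: eq_bigr => p _; apply: eq_bigr => i _.
  by rewrite inj //; move=> q [].
move=> hno.
apply: big1 => p _; apply: big1 => i _.
case: asboolP => // h; exfalso; apply: hno.
by exists (face R X m i p.2); split => // q [].
Qed.
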